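(* Let $g\ge0$, let $\mu,\nu$ be partitions of $n\ge1$ with $b=g-1+\ell(\mu)+\ell(\nu)>0$, and let $(\sigma_1,\eta_1,\dots,\eta_b,\sigma_2)\in C_g(\mu,\nu)$. Then the pair $(\pi:\Gamma_1\to\Gamma_2,\iota)$ obtained from this tuple by the construction described in the context is a twisted tropical cover (of type $(g,\mu,\nu)$).
   Context: Let $\tau=(1\ \,n{+}1)(2\ \,n{+}2)\cdots(n\ \,2n)\in S_{2n}$, $C^\sim(\tau)=\{\sigma\in S_{2n}:\tau\sigma\tau=\sigma^{-1}\}$. For $\sigma\in C^\sim(\tau)$ each cycle $c$ either has a different cycle $c'$ with $\tau c\tau=c'^{-1}$ ($\tau$-symmetric partners) or satisfies $\tau c\tau=c^{-1}$ (self-symmetric). $B^\sim_n$: elements of $C^\sim(\tau)$ without self-symmetric cycles; $B^\sim_\lambda$ ($\lambda\vdash n$): elements of $B^\sim_n$ with $2\ell(\lambda)$ cycles forming $\tau$-symmetric pairs, one pair of length $\lambda_i$ for each $i$. $2\nu$ denotes the partition of $2n$ with each part of $\nu$ repeated twice. $C_g(\mu,\nu)$ is the set of tuples $(\sigma_1,\eta_1,\dots,\eta_b,\sigma_2)$ with $\sigma_1\in B^\sim_\mu$, $\sigma_2$ of cycle type $2\nu$, each $\eta_i$ a transposition $(x\ y)$ with $y\neq\tau(x)$, $\eta_b\cdots\eta_1\sigma_1(\tau\eta_1\tau)\cdots(\tau\eta_b\tau)=\sigma_2$, and $\langle\sigma_1,\eta_i,\tau\eta_i\tau,\sigma_2\rangle$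 transitive on $\{1,\dots,2n\}$. Construction. Put $\rho_0=\sigma_1$ and $\rho_i=\eta_i\rho_{i-1}(\tau\eta_i\tau)$, so $\rho_b=\sigma_2$; each $\rho_i\in B^\sim_n$, and passing from $\rho_{i-1}$ to $\rho_i$ changes the cycles in exactly one of three ways: (a) two cycles $c_1,c_2$ are joined into one cycle and simultaneously their $\tau$-partners $c_1',c_2'$ are joined into one cycle; (b) one cycle $c$ is cut into two cycles and simultaneously its partner $c'$ is cut into two cycles; (c) a $\tau$-symmetric pair $c,c'$ is replaced by a new $\tau$-symmetric pair of cycles of the same length; all other cycles are unchanged. Let $\Gamma_2$ be $\mathbb{R}$ subdivided at $p_1<\dots<p_b$, $p_0=-\infty$, $p_{b+1}=\infty$. The graph $\Gamma_1$ has, over $[p_i,p_{i+1}]$, one edge for each cycle of $\rho_i$ (for $i=0$ and $i=b$ these are ends); an unchanged cycle continues as the same edge across $p_i$. Over $p_i$ one inserts: in case (a) two $3$-valent vertices, one with incoming edges $c_1,c_2$ and outgoing the joined cycle, the other with incoming $c_1',c_2'$ and outgoing their join; in case (b) two $3$-valent vertices, one with incoming $c$ and outgoing its two pieces, the other likewise for $c'$; in case (c) one $4$-valent vertex with incoming $c,c'$ and outgoing the new pair. Each edge gets weight equal to the length of its cycle, and $\pi$ maps it to the corresponding interval of $\Gamma_2$ linearly with slope equal to its weight (so an edge over $[p_i,p_{i+1}]$ has length $(p_{i+1}-p_i)/\text{weight}$). The involution $\iota$ sends the edge of a cycle to the edge of its $\tau$-partner (and vertices accordingly). Twisted tropical cover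 of type $(g,\mu,\nu)$: a tropical cover $\pi:\Gamma_1\to\Gamma_2$ (surjective map of connected metric graphs, vertices to vertices, each edge mapped bijectively and linearly with positive integer slope $\omega(e)$, the weight, onto an edge, harmonic: at each vertex $v$ the sum of weights of edges at $v$ over an edge $e'$ at $\pi(v)$ is independent of $e'$) together with an involution $\iota$ of $\Gamma_1$ with $\pi\circ\iota=\pi$, such that $\Gamma_2=\mathbb{R}$ subdivided by $b$ points $p_1<\dots<p_b$; the ends over $(-\infty,p_1]$ form $\ell(\mu)$ $\iota$-exchanged pairs of weights $\mu_1,\dots,\mu_{\ell(\mu)}$ and the ends over $[p_b,\infty)$ form $\ell(\nu)$ $\iota$-exchanged pairs of weights $\nu_1,\dots,\nu_{\ell(\nu)}$; over each $p_i$ there are either two $3$-valent vertices or one $4$-valent vertex; all edges at a $4$-valent vertex have the same weight; the fixed locus of $\iota$ is exactly the set of $4$-valent vertices. *)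

(* Defs.v *)
From HB Require Import structures.
From mathcomp Require Import all_boot all_order all_algebra all_fingroup.
From mathcomp Require Import reals.
Set Implicit Arguments.
Unset Strict Implicit.
Unset Printing Implicit Defensive.
Import Order.TTheory GRing.Theory Num.Theory.

(* Points {1,...,2n} are represented 0-based by 'I_(n+n).                    *)
(* tau = (1 n+1)(2 n+2)...(n 2n), i.e. i |-> i+n mod 2n (0-based).           *)

Definition tauf (n : nat) (i : 'I_(n + n)) : 'I_(n + n) :=
  Ordinal (ltn_pmod (i + n) (leq_ltn_trans (leq0n i) (ltn_ord i))).

Definition tau_set (n : nat) (A : {set 'I_(n + n)}) : {set 'I_(n + n)} :=
  [set tauf x | x in A].

Definition in_Ctilde (n : nat) (s : {perm 'I_(n + n)}) : Prop :=
  forall i, tauf (s (tauf i)) = (s^-1)%g i.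

(* The cycles of s are identified with their supports, the orbits (porbits s).
   For s in C~(tau), the cycle with support O is self-symmetric
   (tau c tau = c^{-1}) iff tau(O) = O. *)
Definition self_symmetric (n : nat) (O : {set 'I_(n + n)}) : bool :=
  tau_set O == O.

Definition in_Btilde (n : nat) (s : {perm 'I_(n + n)}) : Prop :=
  in_Ctilde s /\ (forall O, O \in porbits s -> ~~ self_symmetric O).

(* B~_lambda : the 2 l(lambda) cycles of s form tau-symmetric pairs
   {c i, tau(c i)}, one pair of length lambda_i for each i. *)
Definition in_Btilde_lam (n : nat) (lam : seq nat) (s : {perm 'I_(n + n)}) : Prop :=
  in_Btilde s /\
  exists c : 'I_(size lam) -> {set 'I_(n + n)},
    [/\ forall i, c i \in porbits s,
        forall i, #|c i| = nth 0 lam i,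
        forall O, O \in porbits s -> exists i, O = c i \/ O = tau_set (c i)
      & #|porbits s| = (size lam).*2].

(* cycle type (multiset of cycle lengths, fixed points included) *)
Definition cycle_type (n : nat) (s : {perm 'I_(n + n)}) : seq nat :=
  map (fun O : {set 'I_(n + n)} => #|O|) (enum (porbits s)).

Definition is_partition (n : nat) (lam : seq nat) : bool :=
  [&& sorted geq lam, all (fun k => 0 < k) lam & sumn lam == n].

(* One step  rho |-> eta rho (tau eta tau)  with eta = (x y), as functions
   (right-to-left composition).  MathComp's product (s * t) x = t (s x). *)
Definition tstep (n : nat) (r : {perm 'I_(n + n)}) (xy : 'I_(n + n) * 'I_(n + n))
  : {perm 'I_(n + n)} :=
  (tperm (tauf xy.1) (tauf xy.2) * r * tperm xy.1 xy.2)%g.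

(* rho_k = eta_k ... eta_1 sigma_1 (tau eta_1 tau) ... (tau eta_k tau) *)
Definition rho (n : nat) (s1 : {perm 'I_(n + n)}) (etas : seq ('I_(n + n) * 'I_(n + n)))
  (k : nat) : {perm 'I_(n + n)} :=
  foldl (@tstep n) s1 (take k etas).

(* The tuple (sigma1, eta_1, ..., eta_b, sigma2) with eta_i = (x_i y_i),
   given as etas = [:: (x_1,y_1); ...; (x_b,y_b)]. *)
Definition gens_set (n b : nat) (s1 s2 : {perm 'I_(n + n)})
  (etas : b.-tuple ('I_(n + n) * 'I_(n + n))) : {set {perm 'I_(n + n)}} :=
  s1 |: (s2 |: ([set tperm xy.1 xy.2 | xy in etas]
          :|: [set tperm (tauf xy.1) (tauf xy.2) | xy in etas])).

Definition in_Cg (n b : nat) (mu nu : seq nat) (s1 : {perm 'I_(n + n)})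
  (etas : b.-tuple ('I_(n + n) * 'I_(n + n))) (s2 : {perm 'I_(n + n)}) : Prop :=
  [/\ in_Btilde_lam mu s1,
      perm_eq (cycle_type s2) (nu ++ nu),
      (forall xy, xy \in etas -> xy.1 != xy.2 /\ xy.2 != tauf xy.1),
      rho s1 etas b = s2
    & [transitive <<gens_set s1 s2 etas>>, on [set: 'I_(n + n)] | 'P]].

(* Tropical covers of Gamma_2 = R subdivided at p_1 < ... < p_b.              *)
(* Combinatorial encoding of a metric graph Gamma_1 with a map pi to Gamma_2: *)
(*  - gpv v = i (1 <= i <= b) : the vertex v lies over p_i;                   *)
(*  - ghe e = j (0 <= j <= b) : e maps onto [p_j, p_(j+1)]                    *)
(*    (p_0 = -oo, p_(b+1) = +oo; j = 0 and j = b are ends);                   *)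
(*  - gsrc e / gtgt e : endpoint of e over p_j / over p_(j+1)  (None = the    *)
(*    end goes to infinity); edges are oriented by pi;                        *)
(*  - gwt e : weight (slope), glen e : length of e (meaningful for bounded e).*)

Record graph_over (R : Type) := GraphOver {
  gV : finType;
  gE : finType;
  gpv : gV -> nat;
  ghe : gE -> nat;
  gsrc : gE -> option gV;
  gtgt : gE -> option gV;
  gwt : gE -> nat;
  glen : gE -> R }.

Record twisted_graph (R : Type) := TwistedGraph {
  tgr : graph_over R;
  tiv : gV tgr -> gV tgr;
  tie : gE tgr -> gE tgr }.


Definition bounded_edge (R : Type) (b : nat) (G : graph_over R) (e : gE G) : bool :=
  0 < ghe e < b.

Definition valence (R : Type) (G : graph_over R) (v : gV G) : nat :=
  #|[set e | gsrc e == Some v]| + #|[set e | gtgt e == Some v]|.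

Definition incid (R : Type) (G : graph_over R) : rel (gV G + gE G) :=
  fun a c => match a, c with
  | inl v, inr e | inr e, inl v => (gsrc e == Some v) || (gtgt e == Some v)
  | _, _ => false
  end.

Definition tropical_cover (R : realType) (b : nat) (p : nat -> R) (G : graph_over R)
  : Prop :=
      (forall v : gV G, 1 <= gpv v <= b) /\
      (forall e : gE G, ghe e <= b) /\
      (forall e : gE G, (gsrc e == None) = (ghe e == 0)
                 /\ forall v : gV G, gsrc e = Some v -> gpv v = ghe e) /\
      (forall e : gE G, (gtgt e == None) = (ghe e == b)
                 /\ forall v : gV G, gtgt e = Some v -> gpv v = (ghe e).+1) /\
      (forall e : gE G, 0 < gwt e) /\
      (forall e : gE G, bounded_edge b e -> ((gwt e)%:R * glen e = p (ghe e).+1 - p (ghe e))%R) /\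
      (forall j, j <= b -> exists e : gE G, ghe e = j) /\
      (forall i, 1 <= i <= b -> exists v : gV G, gpv v = i) /\
      (forall v : gV G, \sum_(e : gE G | gtgt e == Some v) gwt e = \sum_(e : gE G | gsrc e == Some v) gwt e) /\
      (forall a c : (gV G + gE G)%type, connect (@incid R G) a c).

(* Twisted tropical cover of type (g, mu, nu).  Vertices of valence 2 are mere
   subdivision points of Gamma_1. *)
Definition twisted_tropical_cover (R : realType) (g : nat) (mu nu : seq nat) (b : nat)
  (p : nat -> R) (X : twisted_graph R) : Prop :=
  let G := tgr X in let iv := @tiv R X in let ie := @tie R X in
     tropical_cover b p G /\
      (forall v : gV G, iv (iv v) = v) /\ (forall e : gE G, ie (ie e) = e) /\
      (forall e : gE G, gsrc (ie e) = omap iv (gsrc e) /\ gtgt (ie e) = omap iv (gtgt e)) /\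
      (forall e : gE G, bounded_edge b e -> glen (ie e) = glen e) /\
      (forall v : gV G, gpv (iv v) = gpv v) /\ (forall e : gE G, ghe (ie e) = ghe e /\ gwt (ie e) = gwt e) /\
      b = (g + size mu + size nu).-1 /\
      (exists a : 'I_(size mu) -> gE G,
         [/\ forall i, ghe (a i) = 0 /\ gwt (a i) = nth 0 mu i,
             forall e : gE G, ghe e = 0 -> exists i, e = a i \/ e = ie (a i)
           & #|[set e : gE G | ghe e == 0]| = (size mu).*2]) /\
      (exists a : 'I_(size nu) -> gE G,
         [/\ forall i, ghe (a i) = b /\ gwt (a i) = nth 0 nu i,
             forall e : gE G, ghe e = b -> exists i, e = a i \/ e = ie (a i)
           & #|[set e : gE G | ghe e == b]| = (size nu).*2]) /\
      (forall i, 1 <= i <= b ->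
         let Vi := [set v : gV G | (gpv v == i) && (valence v != 2)] in
         (exists v w : gV G, [/\ v != w, Vi = [set v; w], valence v = 3 & valence w = 3])
         \/ (exists v : gV G, Vi = [set v] /\ valence v = 4)) /\
      (forall v : gV G, valence v = 4 -> forall e e' : gE G,
         (gsrc e == Some v) || (gtgt e == Some v) ->
         (gsrc e' == Some v) || (gtgt e' == Some v) -> gwt e = gwt e') /\
      (forall e : gE G, ie e != e) /\ (forall v : gV G, iv v = v <-> valence v = 4).

(* Step k (0-based k < b) is the passage rho_k -> rho_(k+1) by                *)
(* eta_(k+1) = (x y); it lies over p_(k+1).                                   *)

Definition sdat (n b : nat) (etas : b.-tuple ('I_(n + n) * 'I_(n + n))) (k : 'I_b) :=
  tnth etas k.

Definition Sset n b etas (k : 'I_b) : {set 'I_(n + n)} :=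
  [set (@sdat n b etas k).1; (sdat etas k).2; tauf (sdat etas k).1; tauf (sdat etas k).2].

(* case (c) : x and y lie in tau-partner cycles of rho_k *)
Definition caseC n b (s1 : {perm 'I_(n + n)}) etas (k : 'I_b) : bool :=
  (@sdat n b etas k).2 \in porbit (rho s1 etas k) (tauf (sdat etas k).1).

Definition touched n b etas (k : 'I_b) (O : {set 'I_(n + n)}) : bool :=
  ~~ [disjoint O & @Sset n b etas k].

(* which of the (at most two) vertices over p_(k+1) an affected cycle is
   attached to : in case (c) the unique 4-valent vertex (true); otherwise the
   vertex of the cycles through x,y (true) or through tau x, tau y (false). *)
Definition side n b s1 etas (k : 'I_b) (O : {set 'I_(n + n)}) : bool :=
  @caseC n b s1 etas k || ~~ [disjoint O & [set (sdat etas k).1; (sdat etas k).2]].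

(* raw vertices : inl (k, s) = vertex of side s at step k;
                  inr (k, O) = 2-valent subdivision point over p_(k+1) on the
                               edge of an unaffected cycle O. *)
Definition rawV (n b : nat) := (('I_b * bool) + ('I_b * {set 'I_(n + n)}))%type.

Definition validV n b s1 etas (v : rawV n b) : bool :=
  match v with
  | inl (k, s) => @caseC n b s1 etas k ==> s
  | inr (k, A) => (A \in porbits (rho s1 etas k)) && ~~ touched etas k A
  end.

Definition cV n b s1 etas := {v : rawV n b | @validV n b s1 etas v}.

(* edges : (j, O) with O a cycle of rho_j, lying over [p_j, p_(j+1)] *)
Definition rawE (n b : nat) := ('I_b.+1 * {set 'I_(n + n)})%type.

Definition validE n b s1 (etas : b.-tuple _) (e : rawE n b) : bool :=
  e.2 \in porbits (@rho n s1 etas e.1).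

Definition cE n b s1 etas := {e : rawE n b | @validE n b s1 etas e}.

(* the vertex over p_(k+1) at which the edge of the cycle O (of rho_k or of
   rho_(k+1)) ends resp. starts *)
Definition vertex_at n b s1 etas (k : nat) (O : {set 'I_(n + n)}) : option (cV s1 etas) :=
  if @insub nat (fun k => k < b) 'I_b k is Some k' then
    insub (if touched etas k' O then inl (k', @side n b s1 etas k' O)
           else inr (k', O))
  else None.

Definition c_src n b s1 etas (e : @cE n b s1 etas) : option (cV s1 etas) :=
  if val (val e).1 == 0 then None else vertex_at s1 etas (val (val e).1).-1 (val e).2.

Definition c_tgt n b s1 etas (e : @cE n b s1 etas) : option (cV s1 etas) :=
  vertex_at s1 etas (val (val e).1) (val e).2.

Definition c_pv n b s1 etas (v : @cV n b s1 etas) : nat :=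
  match val v with inl (k, _) => (val k).+1 | inr (k, _) => (val k).+1 end.

Definition c_he n b s1 etas (e : @cE n b s1 etas) : nat := val (val e).1.

Definition c_wt n b s1 etas (e : @cE n b s1 etas) : nat := #|(val e).2|.

Definition c_len (R : realType) (p : nat -> R) n b s1 etas (e : @cE n b s1 etas) : R :=
  ((p (c_he e).+1 - p (c_he e)) / (c_wt e)%:R)%R.

Definition c_iv n b s1 etas (v : @cV n b s1 etas) : cV s1 etas :=
  insubd v (match val v with
            | inl (k, s) => inl (k, caseC s1 etas k || ~~ s)
            | inr (k, A) => inr (k, tau_set A)
            end).

Definition c_ie n b s1 etas (e : @cE n b s1 etas) : cE s1 etas :=
  insubd e ((val e).1, tau_set (val e).2).

Definition construction (R : realType) (p : nat -> R) (n b : nat)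
  (s1 : {perm 'I_(n + n)}) (etas : b.-tuple ('I_(n + n) * 'I_(n + n)))
  : twisted_graph R :=
  @TwistedGraph R
    (@GraphOver R (cV s1 etas) (cE s1 etas) (@c_pv n b s1 etas) (@c_he n b s1 etas)
       (@c_src n b s1 etas) (@c_tgt n b s1 etas) (@c_wt n b s1 etas)
       (@c_len R p n b s1 etas))
    (@c_iv n b s1 etas) (@c_ie n b s1 etas).

(* Main.v *)
Require Import Defs.
From HB Require Import structures.
From mathcomp Require Import all_boot all_order all_algebra all_fingroup.
From mathcomp Require Import reals zify.
Set Implicit Arguments.
Unset Strict Implicit.
Unset Printing Implicit Defensive.

Section GenPerm.
Variable T : finType.
Implicit Types (s : {perm T}) (a b z w : T).

Lemma G1 s a b z : a \notin porbit s z -> b \notin porbit s z ->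
  porbit (tperm a b * s)%g z = porbit s z.
Proof.
move=> az bz.
suffices exp_id m: (((tperm a b * s)%g ^+ m)%g z) = ((s ^+ m)%g z).
  apply/porbit_setP => u; apply/idP/idP=> /porbitP[i ->].
    by rewrite exp_id mem_porbit.
  by rewrite -exp_id mem_porbit.
elim: m => // m IHm; rewrite !expgSr !permM {}IHm tpermD //.
  by apply: contraNneq az => ->; apply: mem_porbit.
by apply: contraNneq bz => ->; apply: mem_porbit.
Qed.

Lemma G2sub s a b : porbit (tperm a b * s)%g a :|: porbit (tperm a b * s)%g b
   \subset porbit s a :|: porbit s b.
Proof.
apply/subsetP => w Hw; apply/negPn/negP; rewrite !inE negb_or => /andP[wa wb].
have aw : a \notin porbit s w by rewrite porbit_sym.
have bw : b \notin porbit s w by rewrite porbit_sym.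
have := G1 aw bw => E.
move: Hw; rewrite inE => /orP[] H.
  by move: aw; rewrite -E porbit_sym H.
by move: bw; rewrite -E porbit_sym H.
Qed.

Lemma G2 s a b : porbit (tperm a b * s)%g a :|: porbit (tperm a b * s)%g b
   = porbit s a :|: porbit s b.
Proof.
apply/eqP; rewrite eqEsubset G2sub /=.
have := G2sub (tperm a b * s)%g a b; by rewrite mulgA tperm2 mul1g.
Qed.

Lemma G3 s x y : x != y -> (x \in porbit (tperm x y * s)%g y) = (x \notin porbit s y).
Proof.
move=> ne_xy.
pose xf a b (u : {perm T}) := seq.find (pred2 a b) (traject u (u a) #|porbit u a|).
have xf_size a b u: xf a b u <= #|porbit u a|.
  by rewrite (leq_trans (find_size _ _)) ?size_traject.
have lt_xf a b u n : n < xf a b u -> ~~ pred2 a b ((u ^+ n.+1)%g a).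
  move=> lt_n; apply: contraFN (before_find (u a) lt_n).
  by rewrite permX iterSr nth_traject // (leq_trans lt_n).
pose t a b (u : {perm T}) := (tperm a b * u)%g.
have tC a b u : t a b u = t b a u by rewrite /t tpermC.
have tK a b: involutive (t a b) by move=> u; apply: tpermKg.
have tXC a b u n: n <= xf a b u -> ((t a b u ^+ n.+1)%g b) = ((u ^+ n.+1)%g a).
  elim: n => [|n IHn] lt_n_f; first by rewrite permM tpermR.
  rewrite !(expgSr _ n.+1) !permM {}IHn 1?ltnW //; congr (u _).
  by case/lt_xf/norP: lt_n_f => ne_a ne_b; rewrite tpermD // eq_sym.
have eq_xf a b u: pred2 a b ((u ^+ (xf a b u).+1)%g a).
  have ua_a: a \in porbit u (u a) by rewrite porbit_sym (mem_porbit _ 1).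
  have has_f: has (pred2 a b) (traject u (u a) #|porbit u (u a)|).
    by apply/hasP; exists a; rewrite /= ?eqxx -?porbit_traject.
  have:= nth_find (u a) has_f; rewrite has_find size_traject in has_f.
  rewrite -eq_porbit_mem in ua_a.
  by rewrite nth_traject // -iterSr -permX -(eqP ua_a).
have xfC a b u: xf b a (t a b u) = xf a b u.
  without loss lt_a: a b u / xf b a (t a b u) < xf a b u.
    move=> IHab; set m := xf b a _; set n := xf a b u.
    by case: (ltngtP m n) => // ltx; [apply: IHab | rewrite -[m]IHab tC tK].
  by move/lt_xf: (lt_a); rewrite -(tXC a b) 1?ltnW //= orbC [_ || _]eq_xf.
move/eqP: ne_xy => ne_xy; rewrite -/(t x y s).
without loss xf_x: s x y ne_xy / ((s ^+ (xf x y s).+1)%g x) = x.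
  move=> IHs; have ne_yx := nesym ne_xy; have:= eq_xf x y s; set n := xf x y s.
  case/pred2P=> [|snx]; first exact: IHs.
  by rewrite -[x \in _]negbK ![x \in _]porbit_sym -{}IHs ?xfC ?tXC // tC tK.
rewrite -{1}xf_x -(tXC _ _ _ _ (leqnn _)) mem_porbit; symmetry.
rewrite -eq_porbit_mem eq_sym eq_porbit_mem porbit_traject.
apply/trajectP=> [[n _ snx]].
have: looping s x (xf x y s).+1 by rewrite /looping -permX xf_x inE eqxx.
move/loopingP/(_ n); rewrite -{n}snx.
case/trajectP=> [[_|i]]; first exact: nesym; rewrite ltnS -permX => lt_i def_y.
by move/lt_xf: lt_i; rewrite def_y /= eqxx orbT.
Qed.

End GenPerm.
Section Tau.
Variable n : nat.
Local Notation T := ('I_(n + n)).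
Local Notation tau := (@tauf n).
Implicit Types (r s : {perm T}) (x y z w u : T).

Lemma tauK : involutive tau.
Proof.
move=> i; apply: val_inj => /=.
rewrite modnDml -addnA modnDr modn_small //.
Qed.

Lemma tau_inj : injective tau. Proof. exact: inv_inj tauK. Qed.

Lemma tau_neq (n0 : 0 < n) z : tau z != z.
Proof.
apply/eqP => /(congr1 val) /=; have := ltn_ord z.
case: (ltnP z n) => hz hlt.
  rewrite modn_small; lia.
have -> : (z + n = (z - n) + (n + n))%N by lia.
rewrite modnDr modn_small; lia.
Qed.

Lemma mem_tau_set (A : {set T}) z : (z \in tau_set A) = (tau z \in A).
Proof.
apply/imsetP/idP => [[w wA ->]|H]; first by rewrite tauK.
by exists (tau z); rewrite ?tauK.
Qed.

Lemma tau_setK : involutive (@tau_set n).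
Proof. by move=> A; apply/setP => z; rewrite !mem_tau_set tauK. Qed.

Lemma card_tau_set (A : {set T}) : #|tau_set A| = #|A|.
Proof. by rewrite card_imset //; apply: tau_inj. Qed.

Lemma tau_tperm x y z : tau (tperm x y z) = tperm (tau x) (tau y) (tau z).
Proof. by apply: inj_tperm; apply: tau_inj. Qed.

Lemma Ct_r r u : in_Ctilde r -> r (tau u) = tau ((r^-1)%g u).
Proof. by move=> H; rewrite -H tauK. Qed.

Lemma Ct_inv r : in_Ctilde r -> in_Ctilde (r^-1)%g.
Proof.
move=> H i; rewrite invgK.
have E : r (tau (r i)) = tau i by rewrite Ct_r // permK.
by rewrite -E permK tauK.
Qed.

Lemma Ct_iter r m u : in_Ctilde r -> ((r ^+ m)%g (tau u)) = tau (((r^-1) ^+ m)%g u).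
Proof.
move=> H; elim: m => [|m IH]; first by rewrite !expg0 !perm1.
by rewrite !expgSr !permM IH Ct_r.
Qed.

Lemma Ct_orbit r z : in_Ctilde r -> porbit r (tau z) = tau_set (porbit r z).
Proof.
move=> H; apply/setP => w; rewrite mem_tau_set; apply/idP/idP.
  move/porbitP => [m ->]; rewrite Ct_iter // tauK -porbitV; exact: mem_porbit.
move/porbitP => [m E].
have : ((r^-1 ^+ m)%g (tau z)) = w.
  by have H' := Ct_inv H; rewrite Ct_iter // invgK -E tauK.
move <-; rewrite -porbitV; exact: mem_porbit.
Qed.

Definition BT r := in_Ctilde r /\ forall z, r z != tau z.

Lemma BT_notin (n0 : 0 < n) r z : BT r -> tau z \notin porbit r z.
Proof.
move=> [H1 H2]; apply/negP => /porbitP [a Ea].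
set i := a./2; set o := odd a.
have Ha : a = ((i + o) + i)%N by rewrite /i /o; have := odd_double_half a; lia.
have Hw : tau ((r ^+ i)%g z) = ((r ^+ (i + o))%g z).
  have := Ct_iter i z (Ct_inv H1); rewrite invgK => <-.
  by rewrite Ea Ha -permM expgD -mulgA expgVn mulgV mulg1.
move: Hw; rewrite /o; case: (odd a) => /= Hw.
  by have := H2 ((r ^+ i)%g z); rewrite Hw addn1 expgSr permM eqxx.
by have := tau_neq n0 ((r ^+ i)%g z); rewrite Hw addn0 eqxx.
Qed.

Lemma BT_noself (n0 : 0 < n) r O : BT r -> O \in porbits r -> ~~ self_symmetric O.
Proof.
move=> H /imsetP [z _ ->]; rewrite /self_symmetric -Ct_orbit; last by case: H.
rewrite eq_porbit_mem; exact: BT_notin.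
Qed.

Lemma Btilde_BT r : in_Btilde r -> BT r.
Proof.
move=> [H1 H2]; split => // z; apply/eqP => E.
have Hz : porbit r z \in porbits r by apply: imset_f.
have := H2 _ Hz.
rewrite /self_symmetric -Ct_orbit // eq_porbit_mem -E.
by rewrite -{1}(expg1 r) mem_porbit.
Qed.

Lemma tstepE r (xy : T * T) z :
  tstep r xy z = tperm xy.1 xy.2 (r (tperm (tau xy.1) (tau xy.2) z)).
Proof. by rewrite /tstep !permM. Qed.

Lemma BT_step r xy : BT r -> BT (tstep r xy).
Proof.
case: xy => x y [H1 H2]; split.
  move=> i; rewrite tstepE /= /tstep !invMg !tpermV !permM.
  rewrite -{1}(tauK x) -{1}(tauK y) -tau_tperm tauK Ct_r // tau_tperm !tauK.
  done.
move=> z; rewrite tstepE /=; apply/eqP => E.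
have : r (tperm (tau x) (tau y) z) = tau (tperm (tau x) (tau y) z).
  by rewrite tau_tperm !tauK -E tpermK.
by apply/eqP; apply: H2.
Qed.

Lemma BT_foldl r l : BT r -> BT (foldl (@tstep n) r l).
Proof. by elim: l r => //= a l IH r H; apply: IH; apply: BT_step. Qed.

End Tau.
Section Step.
Variable n : nat.
Local Notation T := ('I_(n + n)).
Local Notation tau := (@tauf n).
Implicit Types (r s q : {perm T}) (x y z w u : T).

Lemma tstep_orbit r x y z :
  porbit (tstep r (x, y)) z = porbit (tperm x y * (tperm (tau x) (tau y) * r)^-1)%g z.
Proof. by rewrite -porbitV /tstep /= invMg tpermV. Qed.

Lemma tstepK r x y : tstep (tstep r (x, y)) (x, y) = r.
Proof. by rewrite /tstep /= !mulgA tperm2 mul1g -mulgA tperm2 mulg1. Qed.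

Lemma S1 r x y z : x \notin porbit r z -> y \notin porbit r z ->
  tau x \notin porbit r z -> tau y \notin porbit r z ->
  porbit (tstep r (x, y)) z = porbit r z.
Proof.
move=> hx hy htx hty; rewrite tstep_orbit.
have Em : porbit (tperm (tau x) (tau y) * r)%g z = porbit r z by rewrite G1.
rewrite G1 porbitV Em //.
Qed.

Lemma S1' r x y z : x \notin porbit (tstep r (x, y)) z -> y \notin porbit (tstep r (x, y)) z ->
  tau x \notin porbit (tstep r (x, y)) z -> tau y \notin porbit (tstep r (x, y)) z ->
  porbit r z = porbit (tstep r (x, y)) z.
Proof. by move=> *; rewrite -{1}(tstepK r x y) S1. Qed.

Variable n0 : 0 < n.

Lemma tau_orb_sym r x y : in_Ctilde r -> (tau y \in porbit r x) = (y \in porbit r (tau x)).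
Proof. by move=> H; rewrite Ct_orbit // mem_tau_set. Qed.

Section NonC.
Variables (r : {perm T}) (x y : T).
Hypotheses (Hr : BT r) (xy : x != y) (ytx : y != tau x) (nC : y \notin porbit r (tau x)).

Let m := (tperm (tau x) (tau y) * r)%g.

Lemma m_x : porbit m x = porbit r x.
Proof.
apply: G1; first exact: BT_notin.
by rewrite tau_orb_sym //; case: Hr.
Qed.

Lemma m_y : porbit m y = porbit r y.
Proof.
apply: G1; last exact: BT_notin.
by rewrite porbit_sym.
Qed.

Lemma S2a : porbit (tstep r (x, y)) x :|: porbit (tstep r (x, y)) y = porbit r x :|: porbit r y.
Proof. by rewrite !tstep_orbit G2 !porbitV m_x m_y. Qed.

Lemma S2b : (y \in porbit (tstep r (x, y)) x) = (y \notin porbit r x).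
Proof.
rewrite porbit_sym tstep_orbit G3 // porbitV m_y porbit_sym //.
Qed.

Lemma S2c : y \notin porbit (tstep r (x, y)) (tau x).
Proof.
have Hr' := BT_step (x, y) Hr.
rewrite -tau_orb_sym; last by case: Hr'.
apply/negP => H.
have : tau y \in porbit (tstep r (x, y)) x :|: porbit (tstep r (x, y)) y by rewrite inE H.
rewrite S2a inE => /orP[].
  by rewrite tau_orb_sym ?(negbTE nC) //; case: Hr.
by apply/negP; apply: BT_notin.
Qed.

End NonC.

Section CaseC.
Variables (r : {perm T}) (x y : T).
Hypotheses (Hr : BT r) (xy : x != y) (ytx : y != tau x) (isC : y \in porbit r (tau x)).

Let m := (tperm (tau x) (tau y) * r)%g.

Lemma C_ty : porbit r (tau y) = porbit r x.
Proof. by apply/eqP; rewrite eq_porbit_mem tau_orb_sym //; case: Hr. Qed.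

Lemma C_m : porbit m (tau x) = porbit r x :|: porbit r (tau x)
         /\ porbit m (tau y) = porbit r x :|: porbit r (tau x).
Proof.
have E := G2 r (tau x) (tau y); rewrite C_ty -/m in E.
have ne : tau x != tau y by apply/eqP => /tau_inj /eqP; rewrite (negbTE xy).
have J : tau x \in porbit m (tau y) by rewrite G3 // C_ty BT_notin.
have J' : porbit m (tau x) = porbit m (tau y) by apply/eqP; rewrite eq_porbit_mem.
by rewrite -J' setUid setUC in E; rewrite -J' E.
Qed.

Lemma C_mxy : porbit m x = porbit r x :|: porbit r (tau x)
           /\ porbit m y = porbit r x :|: porbit r (tau x).
Proof.
case: C_m => E1 _; split.
  apply/eqP; rewrite -E1 eq_porbit_mem E1 inE porbit_id //.
apply/eqP; rewrite -E1 eq_porbit_mem E1 inE isC orbT //.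
Qed.

Lemma S3a : porbit (tstep r (x, y)) x :|: porbit (tstep r (x, y)) y
          = porbit r x :|: porbit r (tau x).
Proof.
case: C_mxy => E1 E2.
by rewrite !tstep_orbit G2 !porbitV E1 E2 setUid.
Qed.

Lemma S3b : y \in porbit (tstep r (x, y)) (tau x).
Proof.
have Hr' := BT_step (x, y) Hr.
have : tau x \in porbit (tstep r (x, y)) x :|: porbit (tstep r (x, y)) y.
  by rewrite S3a !inE porbit_id orbT.
rewrite inE (negbTE (BT_notin n0 x Hr')) /= porbit_sym //.
Qed.

Lemma S3c : porbit (tstep r (x, y)) x :|: porbit (tstep r (x, y)) (tau x)
          = porbit r x :|: porbit r (tau x).
Proof.
have E : porbit (tstep r (x, y)) (tau x) = porbit (tstep r (x, y)) y.
  by apply/eqP; rewrite eq_porbit_mem porbit_sym S3b.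
by rewrite E S3a.
Qed.

End CaseC.

End Step.



Lemma ndisj2 (T : finType) (A : {set T}) a b :
  ~~ [disjoint A & [set a; b]] = (a \in A) || (b \in A).
Proof.
by rewrite disjoint_sym disjoints_subset !subUset !sub1set !inE negb_and !negbK.
Qed.

Lemma ndisj4 (T : finType) (A : {set T}) a b c d :
  ~~ [disjoint A & [set a; b; c; d]] = [|| a \in A, b \in A, c \in A | d \in A].
Proof.
by rewrite disjoint_sym disjoints_subset !subUset !sub1set !inE !negb_and !negbK !orbA.
Qed.

Lemma porbitsP (T : finType) (s : {perm T}) O :
  reflect (exists z, O = porbit s z) (O \in porbits s).
Proof.
apply: (iffP imsetP) => [[z _ ->]|[z ->]]; by exists z.
Qed.

Section GenOrb.
Variable n : nat.
Local Notation T := ('I_(n + n)).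
Lemma memE (q : {perm T}) a z : (a \in porbit q z) = (porbit q z == porbit q a).
Proof. by rewrite eq_porbit_mem porbit_sym. Qed.

Lemma orb_disj (q : {perm T}) a c : porbit q a != porbit q c ->
  porbit q a :&: porbit q c = set0.
Proof.
move=> ne; apply/setP => z; rewrite !inE; apply/negP => /andP[h1 h2].
by move: ne; rewrite memE in h1; rewrite memE in h2; rewrite (eqP h1) (eqP h2) eqxx.
Qed.

Lemma tau_orbits (q : {perm T}) O : in_Ctilde q -> O \in porbits q -> tau_set O \in porbits q.
Proof. by move=> H /porbitsP[z ->]; rewrite -Ct_orbit // imset_f. Qed.

End GenOrb.

Section Reps.
Variable N : nat.
Local Notation T := ('I_N).

Definition Pmin (A B : {set T}) : bool := [exists z in A, [forall w in B, z < w]].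

Lemma Pmin_aux (A B : {set T}) m : [disjoint A & B] -> m \in A ->
  (forall w, w \in A :|: B -> m <= w) -> Pmin A B && ~~ Pmin B A.
Proof.
move=> dAB mA Hm; apply/andP; split.
  apply/existsP; exists m; rewrite mA /=; apply/forallP => w; apply/implyP => wB.
  rewrite ltn_neqAle Hm ?inE ?wB ?orbT // andbT.
  apply/negP => /eqP E; have E' : m = w by apply: ord_inj.
  by subst w; move: (disjointFr dAB mA); rewrite wB.
apply/negP => /existsP [z /andP[zB /forallP /(_ m)]].
by rewrite mA /= ltnNge Hm // inE zB orbT.
Qed.

Lemma Pmin_xor (A B : {set T}) z0 : [disjoint A & B] -> z0 \in A ->
  Pmin A B != Pmin B A.
Proof.
move=> dAB zA.
have zU : z0 \in A :|: B by rewrite inE zA.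
case: (@arg_minnP _ z0 (mem (A :|: B)) (fun i : T => nat_of_ord i) zU) => m mU Hm.
have [mX|mX] : m \in A \/ m \in B by apply/setUP.
  by have /andP[-> ->] := Pmin_aux dAB mX Hm.
rewrite disjoint_sym in dAB.
have Hm' : forall w, w \in B :|: A -> m <= w by move=> w; rewrite setUC; apply: Hm.
by have /andP[h1 h2] := Pmin_aux dAB mX Hm'; rewrite h1 (negbTE h2).
Qed.

End Reps.

Section Pairs.
Variable n : nat.
Hypothesis n0 : 0 < n.
Local Notation T := ('I_(n + n)).
Local Notation tau := (@tauf n).

Definition Rep (q : {perm T}) := [set O in porbits q | Pmin O (tau_set O)].

Lemma orbit_inq (q : {perm T}) z : porbit q z \in porbits q.
Proof. exact: imset_f. Qed.

Lemma rep_xor (q : {perm T}) O : BT q -> O \in porbits q ->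
  (O \in Rep q) != (tau_set O \in Rep q).
Proof.
move=> Bq /porbitsP [z ->]; have Cq : in_Ctilde q by case: Bq.
rewrite !inE -Ct_orbit // !orbit_inq /= Ct_orbit // tau_setK.
apply: (@Pmin_xor _ _ _ z); last exact: porbit_id.
rewrite -setI_eq0 -Ct_orbit // orb_disj //.
by rewrite eq_porbit_mem porbit_sym BT_notin.
Qed.


Lemma count_card (A : {set {set T}}) (P : pred nat) :
  count P (map (fun O : {set T} => #|O|) (enum A)) = #|[set O in A | P (#|O|)]|.
Proof.
rewrite count_map -sum1_count big_enum_cond -sum1_card.
by apply: eq_bigl => O; rewrite !inE.
Qed.

Lemma mem_tau_imset (S : {set {set T}}) O : (O \in (@tau_set n) @: S) = (tau_set O \in S).
Proof.
apply/imsetP/idP => [[O' h ->]|h]; first by rewrite tau_setK.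
by exists (tau_set O); rewrite ?tau_setK.
Qed.

Lemma count_ct (q : {perm T}) (P : pred nat) : BT q ->
  count P (cycle_type q) = 2 * count P (map (fun O : {set T} => #|O|) (enum (Rep q))).
Proof.
move=> Bq; have Cq : in_Ctilde q by case: Bq.
rewrite /cycle_type !count_card.
rewrite -(cardsID (Rep q)).
have E1 : [set O in porbits q | P (#|O|)] :&: Rep q = [set O in Rep q | P (#|O|)].
  apply/setP => O; rewrite !inE; case: (boolP (O \in porbits q)) => h //=.
  by rewrite andbC.
have E2 : [set O in porbits q | P (#|O|)] :\: Rep q = (@tau_set n) @: [set O in Rep q | P (#|O|)].
  apply/setP => O; rewrite mem_tau_imset !inE card_tau_set.
  case: (boolP (O \in porbits q)) => h /=; last first.
    case: (boolP (tau_set O \in porbits q)) => //= h'.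
    by move: h; rewrite -(tau_setK O) tau_orbits.
  have := rep_xor Bq h; rewrite !inE h tau_orbits //=.
  by case: (Pmin _ _); case: (Pmin _ _); case: (P _).
rewrite E1 E2 card_imset; first by rewrite mul2n -addnn.
exact: (inv_inj (@tau_setK n)).
Qed.

Lemma pairs_cover (q : {perm T}) (nu : seq nat) : BT q -> perm_eq (cycle_type q) (nu ++ nu) ->
  exists c : 'I_(size nu) -> {set T},
    [/\ forall i, c i \in porbits q, forall i, #|c i| = nth 0 nu i &
        forall O, O \in porbits q -> exists i, O = c i \/ O = tau_set (c i)].
Proof.
move=> Bq Hp; have Cq : in_Ctilde q by case: Bq.
set M := (map (fun O : {set T} => #|O|) (enum (Rep q))).
have HM : perm_eq nu M.
  apply/seq.permP => P; move/seq.permP: Hp => /(_ P).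
  rewrite count_ct // count_cat (addnn (count P nu)) -mul2n => /eqP; rewrite eqn_mul2l /= => /eqP.
  by move=> ->.
case/(perm_iotaP 0): HM => Is HIs Enu.
have sIs : size Is = size nu by rewrite Enu size_map.
have sM : size M = size (enum (Rep q)) by rewrite size_map.
pose c (i : 'I_(size nu)) := nth set0 (enum (Rep q)) (nth 0 Is i).
have Hj : forall i : 'I_(size nu), nth 0 Is i < size (enum (Rep q)).
  move=> i; rewrite -sM.
  have : nth 0 Is i \in Is by apply: mem_nth; rewrite sIs.
  by rewrite (perm_mem HIs) mem_iota.
exists c; split.
- move=> i; have : c i \in enum (Rep q) by apply: mem_nth.
  by rewrite mem_enum inE => /andP[].
- move=> i; have -> : nth 0 nu i = nth 0 (map (nth 0 M) Is) i by rewrite -Enu.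
  by rewrite (nth_map 0) ?sIs // /M (nth_map set0).
move=> O HO.
have [R0 [HR0 HOR]] : exists R0, R0 \in Rep q /\ (O = R0 \/ O = tau_set R0).
  have := rep_xor Bq HO; case: (boolP (O \in Rep q)) => h /=.
    by exists O; split => //; left.
  by rewrite negbK => h'; exists (tau_set O); split => //; right; rewrite tau_setK.
have jlt : index R0 (enum (Rep q)) < size (enum (Rep q)) by rewrite index_mem mem_enum.
have jIs : index R0 (enum (Rep q)) \in Is by rewrite (perm_mem HIs) mem_iota /= sM.
have ilt : index (index R0 (enum (Rep q))) Is < size nu by rewrite -sIs index_mem.
exists (Ordinal ilt).
have -> : c (Ordinal ilt) = R0 by rewrite /c /= nth_index // nth_index // mem_enum.
exact: HOR.
Qed.

End Pairs.

Section Constr.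
Variables (n b : nat) (s1 : {perm 'I_(n + n)}) (etas : b.-tuple ('I_(n + n) * 'I_(n + n))).
Local Notation T := ('I_(n + n)).
Local Notation tau := (@tauf n).
Hypothesis n0 : 0 < n.
Hypothesis HB0 : BT s1.
Hypothesis Hxy : forall k : 'I_b, (tnth etas k).1 != (tnth etas k).2 /\
                                  (tnth etas k).2 != tau (tnth etas k).1.

Local Notation R k := (rho s1 etas k).
Local Notation X k := (tnth etas k).1.
Local Notation Y k := (tnth etas k).2.

Lemma R_BT k : BT (R k).
Proof. exact: BT_foldl. Qed.

Lemma RS (k : 'I_b) : R k.+1 = tstep (R k) (X k, Y k).
Proof.
rewrite /rho (take_nth (X k, Y k)); last by rewrite size_tuple.
by rewrite foldl_rcons -tnth_nth; case: (tnth etas k).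
Qed.

Lemma R0 : R 0 = s1. Proof. by rewrite /rho take0. Qed.

Lemma touchedE (k : 'I_b) O : touched etas k O =
  [|| X k \in O, Y k \in O, tau (X k) \in O | tau (Y k) \in O].
Proof. by rewrite /touched /Sset /sdat ndisj4. Qed.

Lemma sideE (k : 'I_b) O : side s1 etas k O =
  [|| Y k \in porbit (R k) (tau (X k)), X k \in O | Y k \in O].
Proof. by rewrite /side /caseC /sdat ndisj2. Qed.

Lemma caseCE (k : 'I_b) : caseC s1 etas k = (Y k \in porbit (R k) (tau (X k))).
Proof. by []. Qed.

Definition rawv (k : 'I_b) (O : {set T}) : rawV n b :=
  if touched etas k O then inl (k, side s1 etas k O) else inr (k, O).

Lemma rawv_valid (k : 'I_b) O :
  O \in porbits (R k) \/ O \in porbits (R k.+1) -> validV s1 etas (rawv k O).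
Proof.
rewrite /rawv; case: ifP => Ht /=; first by rewrite /side; case: (caseC _ _ _).
rewrite Ht andbT; case => // /porbitsP [z EO]; subst O.
move: Ht; rewrite touchedE RS => /negbT; rewrite !negb_or => /and4P[h1 h2 h3 h4].
by rewrite -(S1' h1 h2 h3 h4); apply: imset_f.
Qed.

Lemma vertex_at_some (k : 'I_b) O :
  O \in porbits (R k) \/ O \in porbits (R k.+1) ->
  exists u, vertex_at s1 etas k O = Some u /\ val u = rawv k O.
Proof.
move=> HO; rewrite /vertex_at valK.
case: insubP => [u _ Eu|]; first by exists u; rewrite Eu /rawv.
by rewrite -/(rawv k O) rawv_valid.
Qed.


Local Notation cVt := (cV s1 etas).
Local Notation cEt := (cE s1 etas).

Lemma tgt_eqv (e : cEt) (v : cVt) :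
  (c_tgt e == Some v) =
  [exists k : 'I_b, (val (val e).1 == val k) && (rawv k (val e).2 == val v)].
Proof.
rewrite /c_tgt; case: (ltnP (val (val e).1) b) => hj.
  have [u [Eu Vu]] := @vertex_at_some (Ordinal hj) (val e).2 (or_introl (valP e)).
  rewrite /= in Eu; rewrite Eu.
  apply/eqP/existsP => [[<-]|[k /andP[/eqP E1 E2]]].
    by exists (Ordinal hj); rewrite eqxx Vu eqxx.
  have Ek : k = Ordinal hj by apply: ord_inj; rewrite /= E1.
  by subst k; congr Some; apply: val_inj; rewrite Vu; apply/eqP.
rewrite /vertex_at insubF ?ltnNge ?hj //.
symmetry; apply/existsP => [[k /andP[/eqP E _]]].
by move: (ltn_ord k); rewrite -E ltnNge hj.
Qed.

Lemma src_eqv (e : cEt) (v : cVt) :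
  (c_src e == Some v) =
  [exists k : 'I_b, (val (val e).1 == (val k).+1) && (rawv k (val e).2 == val v)].
Proof.
rewrite /c_src; case: (eqVneq (val (val e).1) 0) => Hj0.
  by rewrite Hj0 /=; symmetry; apply/negbTE/negP => /existsP [k].
idtac.
have hj : (val (val e).1).-1 < b.
  have Hlt : val (val e).1 < b.+1 := ltn_ord (val e).1.
  by move: Hlt Hj0; case: (val (val e).1).
have Hj : val (val e).1 = (Ordinal hj).+1 by rewrite /= prednK // lt0n.
have HO : (val e).2 \in porbits (R (Ordinal hj).+1) by rewrite -Hj; apply: (valP e).
have [u [Eu Vu]] := @vertex_at_some (Ordinal hj) (val e).2 (or_intror HO).
rewrite /= in Eu; rewrite Eu.
apply/eqP/existsP => [[<-]|[k /andP[/eqP E1 E2]]].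
  by exists (Ordinal hj); apply/andP; split; [apply/eqP | rewrite Vu].
have Ek : k = Ordinal hj by apply: ord_inj; rewrite /=; move: E1; rewrite Hj => -[].
by subst k; congr Some; apply: val_inj; rewrite Vu; apply/eqP.
Qed.

Lemma rawv_inl k' O k s :
  (rawv k' O == inl (k, s)) = (k' == k) && touched etas k O && (side s1 etas k O == s).
Proof.
rewrite /rawv; case: (eqVneq k' k) => [<-|ne] /=.
  by case: ifP => Ht //=; rewrite /eq_op /= -/eq_op xpair_eqE eqxx.
case: ifP => Ht //=; rewrite /eq_op /= -/eq_op xpair_eqE.
by rewrite (negbTE ne).
Qed.

Lemma rawv_inr k' O k A :
  (rawv k' O == inr (k, A)) = (k' == k) && ~~ touched etas k O && (O == A).
Proof.
rewrite /rawv; case: (eqVneq k' k) => [<-|ne] /=.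
  by case: ifP => Ht //=; rewrite /eq_op /= -/eq_op xpair_eqE eqxx.
case: ifP => Ht //=; rewrite /eq_op /= -/eq_op xpair_eqE.
by rewrite (negbTE ne).
Qed.


Definition Qv (v : rawV n b) : pred {set T} :=
  match v with
  | inl (k, s) => fun O => touched etas k O && (side s1 etas k O == s)
  | inr (k, A) => fun O => ~~ touched etas k O && (O == A)
  end.

Definition lev (v : rawV n b) : 'I_b := match v with inl (k, _) => k | inr (k, _) => k end.

Lemma tgt_Q (e : cEt) (v : cVt) :
  (c_tgt e == Some v) = (val (val e).1 == lev (val v)) && Qv (val v) (val e).2.
Proof.
rewrite tgt_eqv; case: (val v) => [[k s]|[k A]] /=.
  apply/existsP/idP => [[k' /andP[/eqP E1]]|/andP[/eqP E1 H]].
    by rewrite rawv_inl => /andP[/andP[/eqP Ek Ht] Hs]; subst k'; rewrite E1 eqxx Ht Hs.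
  by exists k; rewrite E1 eqxx rawv_inl eqxx.
apply/existsP/idP => [[k' /andP[/eqP E1]]|/andP[/eqP E1 H]].
  by rewrite rawv_inr => /andP[/andP[/eqP Ek Ht] Hs]; subst k'; rewrite E1 eqxx Ht Hs.
by exists k; rewrite E1 eqxx rawv_inr eqxx.
Qed.

Lemma src_Q (e : cEt) (v : cVt) :
  (c_src e == Some v) = (val (val e).1 == (lev (val v)).+1) && Qv (val v) (val e).2.
Proof.
rewrite src_eqv; case: (val v) => [[k s]|[k A]] /=.
  apply/existsP/idP => [[k' /andP[/eqP E1]]|/andP[/eqP E1 H]].
    by rewrite rawv_inl => /andP[/andP[/eqP Ek Ht] Hs]; subst k'; rewrite E1 eqxx Ht Hs.
  by exists k; rewrite E1 eqxx rawv_inl eqxx.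
apply/existsP/idP => [[k' /andP[/eqP E1]]|/andP[/eqP E1 H]].
  by rewrite rawv_inr => /andP[/andP[/eqP Ek Ht] Hs]; subst k'; rewrite E1 eqxx Ht Hs.
by exists k; rewrite E1 eqxx rawv_inr eqxx.
Qed.

Definition Eset (j : nat) (Q : pred {set T}) : {set cEt} :=
  [set e : cEt | (val (val e).1 == j) && Q (val e).2].

Definition sndE (e : cEt) : {set T} := (val e).2.

Lemma img_edges (j : nat) (hj : j < b.+1) (Q : pred {set T}) :
  sndE @: Eset j Q = [set O in porbits (R j) | Q O].
Proof.
apply/setP => O; apply/imsetP/idP.
  move=> [e]; rewrite inE => /andP[/eqP E1 HQ] ->.
  rewrite inE HQ andbT /sndE -E1; exact: (valP e).
rewrite inE => /andP[HO HQ].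
have V : validE s1 etas (Ordinal hj, O) by [].
exists (exist _ (Ordinal hj, O) V) => //.
by rewrite inE /= eqxx.
Qed.

Lemma inj_edges (j : nat) (Q : pred {set T}) : {in Eset j Q &, injective sndE}.
Proof.
move=> [[a1 O1] p1] [[a2 O2] p2]; rewrite !inE /= => /andP[/eqP h1 _] /andP[/eqP h2 _].
rewrite /sndE /= => hO; subst O2; apply: val_inj => /=; congr pair.
by apply: ord_inj; rewrite h1 h2.
Qed.

Lemma card_edges (j : nat) (hj : j < b.+1) (Q : pred {set T}) :
  #|Eset j Q| = #|[set O in porbits (R j) | Q O]|.
Proof. by rewrite -(img_edges hj) card_in_imset //; apply: inj_edges. Qed.

Lemma sum_edges (j : nat) (hj : j < b.+1) (Q : pred {set T}) (F : {set T} -> nat) :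
  \sum_(e in Eset j Q) F (sndE e) = \sum_(O in [set O in porbits (R j) | Q O]) F O.
Proof. by rewrite -(img_edges hj) big_imset //; apply: inj_edges. Qed.

Lemma In_set (v : cVt) : [set e | c_tgt e == Some v] = Eset (lev (val v)) (Qv (val v)).
Proof. by apply/setP => e; rewrite !inE tgt_Q. Qed.

Lemma Out_set (v : cVt) : [set e | c_src e == Some v] = Eset (lev (val v)).+1 (Qv (val v)).
Proof. by apply/setP => e; rewrite !inE src_Q. Qed.



Lemma OS_two (q : {perm T}) (A B : {set T}) (P : pred {set T}) :
  (forall z, P (porbit q z) = (porbit q z == A) || (porbit q z == B)) ->
  A \in porbits q -> B \in porbits q -> [set O in porbits q | P O] = [set A; B].
Proof.
move=> HP hA hB; apply/setP => O; rewrite !inE.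
apply/andP/orP => [[/porbitsP[z ->]]|]; first by rewrite HP => /orP.
by case=> /eqP ->; split => //; [move: hA | move: hB] => /porbitsP[z Ez];
  rewrite Ez HP -Ez eqxx ?orbT.
Qed.

Lemma OS_one (q : {perm T}) (A : {set T}) (P : pred {set T}) :
  (forall z, P (porbit q z) = (porbit q z == A)) ->
  A \in porbits q -> [set O in porbits q | P O] = [set A].
Proof.
move=> HP hA; apply/setP => O; rewrite !inE.
apply/andP/idP => [[/porbitsP[z ->]]|]; first by rewrite HP.
by move=> /eqP ->; split => //; move: hA => /porbitsP[z Ez]; rewrite Ez HP -Ez eqxx.
Qed.

Lemma orbit_in (q : {perm T}) z : porbit q z \in porbits q.
Proof. exact: imset_f. Qed.

Section Local.
Variable k : 'I_b.
Local Notation x := (X k).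
Local Notation y := (Y k).

Lemma OS_nonC_true (q : {perm T}) : ~~ caseC s1 etas k ->
  forall z, Qv (inl (k, true)) (porbit q z) = (porbit q z == porbit q x) || (porbit q z == porbit q y).
Proof.
move=> nC z /=; rewrite touchedE sideE -caseCE (negbTE nC) /= eqb_id -!memE.
by case: (x \in _); case: (y \in _); rewrite /= ?andbF ?andbT ?orbT.
Qed.

Lemma not_both (q : {perm T}) z : BT q -> y \notin porbit q (tau x) ->
  (tau x \in porbit q z) || (tau y \in porbit q z) -> ~~ ((x \in porbit q z) || (y \in porbit q z)).
Proof.
move=> Hq nC; have Cq : in_Ctilde q by case: Hq.
have H1 := BT_notin n0 x Hq; have H2 := BT_notin n0 y Hq.
have H3 : tau y \notin porbit q x by rewrite tau_orb_sym.
have H4 : tau x \notin porbit q y by rewrite porbit_sym.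
rewrite !memE; case/orP => /eqP E; rewrite negb_or; apply/andP; split; apply/negP => /eqP E'.
- by move: H1; rewrite memE -E -E' eqxx.
- by move: H4; rewrite memE -E -E' eqxx.
- by move: H3; rewrite memE -E -E' eqxx.
- by move: H2; rewrite memE -E -E' eqxx.
Qed.

Lemma OS_nonC_false (q : {perm T}) : BT q -> y \notin porbit q (tau x) -> ~~ caseC s1 etas k ->
  forall z, Qv (inl (k, false)) (porbit q z) =
            (porbit q z == porbit q (tau x)) || (porbit q z == porbit q (tau y)).
Proof.
move=> Hq nCq nC z /=; rewrite touchedE sideE -caseCE (negbTE nC) /= -!memE.
move: (@not_both q z Hq nCq).
by case: (x \in _); case: (y \in _); case: (tau x \in _); case: (tau y \in _) => //= NB;
  case: (NB isT).
Qed.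

Lemma OS_C (q : {perm T}) : BT q -> y \in porbit q (tau x) -> caseC s1 etas k ->
  forall z, Qv (inl (k, true)) (porbit q z) =
            (porbit q z == porbit q x) || (porbit q z == porbit q (tau x)).
Proof.
move=> Hq Cq C z /=; rewrite touchedE sideE -caseCE C /= andbT.
have Cy : porbit q y = porbit q (tau x) by apply/eqP; rewrite eq_porbit_mem.
have Cty : porbit q (tau y) = porbit q x.
  by apply/eqP; rewrite eq_porbit_mem tau_orb_sym //; case: Hq.
rewrite !memE Cy Cty.
by case: (_ == porbit q x); case: (_ == porbit q (tau x)).
Qed.

Lemma OS_inr (q : {perm T}) A : A \in porbits q -> ~~ touched etas k A ->
  [set O in porbits q | Qv (inr (k, A)) O] = [set A].
Proof.
move=> hA hT; apply: OS_one => // z /=.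
by case: eqP => [->|]; rewrite ?andbT ?andbF.
Qed.

End Local.



Lemma card2_orb (q : {perm T}) a c :
  #|[set porbit q a; porbit q c]| = (c \notin porbit q a).+1.
Proof. by rewrite cards2 memE eq_sym. Qed.

Lemma sum2_orb (q : {perm T}) a c :
  \sum_(O in [set porbit q a; porbit q c]) #|O| = #|porbit q a :|: porbit q c|.
Proof.
case: (eqVneq (porbit q a) (porbit q c)) => E.
  by rewrite E !setUid big_set1.
by rewrite big_setU1 ?inE // big_set1 cardsU orb_disj // cards0 subn0.
Qed.

Definition InOS (v : cVt) := [set O in porbits (R (lev (val v))) | Qv (val v) O].
Definition OutOS (v : cVt) := [set O in porbits (R (lev (val v)).+1) | Qv (val v) O].

Lemma lev_lt (v : cVt) : val (lev (val v)) < b.+1.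
Proof. exact: leqW (ltn_ord _). Qed.

Lemma lev_ltS (v : cVt) : (val (lev (val v))).+1 < b.+1.
Proof. exact: ltn_ord. Qed.

Lemma cardIn (v : cVt) : #|[set e | c_tgt e == Some v]| = #|InOS v|.
Proof. by rewrite In_set (card_edges (lev_lt v)). Qed.

Lemma cardOut (v : cVt) : #|[set e | c_src e == Some v]| = #|OutOS v|.
Proof. by rewrite Out_set (card_edges (lev_ltS v)). Qed.

Lemma sumIn (v : cVt) : \sum_(e | c_tgt e == Some v) #|sndE e| = \sum_(O in InOS v) #|O|.
Proof.
rewrite -(sum_edges (lev_lt v)); apply: eq_bigl => e; by rewrite inE tgt_Q.
Qed.

Lemma sumOut (v : cVt) : \sum_(e | c_src e == Some v) #|sndE e| = \sum_(O in OutOS v) #|O|.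
Proof.
rewrite -(sum_edges (lev_ltS v)); apply: eq_bigl => e; by rewrite inE src_Q.
Qed.

Lemma memIn (v : cVt) e : c_tgt e == Some v -> sndE e \in InOS v.
Proof.
move=> H; rewrite /InOS -(img_edges (lev_lt v)); apply: imset_f.
by rewrite inE -tgt_Q.
Qed.

Lemma memOut (v : cVt) e : c_src e == Some v -> sndE e \in OutOS v.
Proof.
move=> H; rewrite /OutOS -(img_edges (lev_ltS v)); apply: imset_f.
by rewrite inE -src_Q.
Qed.

Section Vert.
Variables (v : cVt) (k : 'I_b) (s : bool).
Hypothesis Hv : val v = inl (k, s).
Local Notation x := (X k).
Local Notation y := (Y k).
Local Notation r := (R k).
Local Notation r' := (R k.+1).

Lemma vert_nonC : ~~ caseC s1 etas k ->
  InOS v = (if s then [set porbit r x; porbit r y] else [set porbit r (tau x); porbit r (tau y)])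
  /\ OutOS v = (if s then [set porbit r' x; porbit r' y]
                else [set porbit r' (tau x); porbit r' (tau y)]).
Proof.
move=> nC; rewrite /InOS /OutOS Hv /=.
have [h1 h2] := Hxy k.
have nC' : y \notin porbit r' (tau x) by rewrite RS; apply: S2c => //; apply: R_BT.
case: s Hv => Hv'; split; apply: OS_two; rewrite ?orbit_in //.
- by apply: OS_nonC_true.
- by apply: OS_nonC_true.
- by apply: OS_nonC_false => //; apply: R_BT.
- by apply: OS_nonC_false => //; apply: R_BT.
Qed.

Lemma vert_C : caseC s1 etas k ->
  InOS v = [set porbit r x; porbit r (tau x)] /\ OutOS v = [set porbit r' x; porbit r' (tau x)].
Proof.
move=> C; have Vs : s by move: (valP v); rewrite Hv /= C.
move: Hv; rewrite Vs => Hv'.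
have [h1 h2] := Hxy k.
have C' : y \in porbit r' (tau x) by rewrite RS; apply: S3b => //; apply: R_BT.
rewrite /InOS /OutOS Hv' /=; split; apply: OS_two; rewrite ?orbit_in //.
- by apply: OS_C => //; apply: R_BT.
- by apply: OS_C => //; apply: R_BT.
Qed.


Lemma tau_mem (q : {perm T}) a c : in_Ctilde q ->
  (tau c \in porbit q (tau a)) = (c \in porbit q a).
Proof. by move=> H; rewrite Ct_orbit // mem_tau_set tauK. Qed.

Lemma tau_union (q : {perm T}) a c : in_Ctilde q ->
  porbit q (tau a) :|: porbit q (tau c) = tau_set (porbit q a :|: porbit q c).
Proof. by move=> H; rewrite !Ct_orbit // /tau_set imsetU. Qed.

Lemma deg_inl : #|OutOS v| + #|InOS v| = if caseC s1 etas k then 4 else 3.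
Proof.
have [h1 h2] := Hxy k.
have B := R_BT k; have B' := R_BT k.+1.
have C1 : in_Ctilde r by case: B.
have C1' : in_Ctilde r' by case: B'.
case: ifP => C.
  have [-> ->] := vert_C C.
  by rewrite !card2_orb !BT_notin.
have nC : ~~ caseC s1 etas k by rewrite C.
have [-> ->] := vert_nonC nC.
have E : (y \in porbit r' x) = (y \notin porbit r x) by rewrite RS S2b.
case: s Hv => _; rewrite !card2_orb ?tau_mem // E; by case: (y \in _).
Qed.

Lemma harm_inl : \sum_(O in OutOS v) #|O| = \sum_(O in InOS v) #|O|.
Proof.
have [h1 h2] := Hxy k.
have B := R_BT k; have B' := R_BT k.+1.
have C1 : in_Ctilde r by case: B.
have C1' : in_Ctilde r' by case: B'.
case: (boolP (caseC s1 etas k)) => C.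
  have [-> ->] := vert_C C.
  rewrite !sum2_orb; congr #|_|; rewrite RS S3c //.
have [-> ->] := vert_nonC C.
have E : porbit r' x :|: porbit r' y = porbit r x :|: porbit r y by rewrite RS S2a.
case: s Hv => _; rewrite !sum2_orb ?tau_union // E //.
Qed.

End Vert.

Section VertR.
Variables (v : cVt) (k : 'I_b) (A : {set T}).
Hypothesis Hv : val v = inr (k, A).

Lemma vert_inr : InOS v = [set A] /\ OutOS v = [set A].
Proof.
have := valP v; rewrite Hv /= => /andP[hA hT].
rewrite /InOS /OutOS Hv /=; split; apply: OS_inr => //.
move/porbitsP: hA => [z Ez]; subst A.
move: hT; rewrite touchedE !negb_or => /and4P[t1 t2 t3 t4].
by rewrite RS -(S1 t1 t2 t3 t4); apply: orbit_in.
Qed.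

End VertR.

Definition vdeg (v : cVt) : nat :=
  match val v with inr _ => 2 | inl (k, _) => if caseC s1 etas k then 4 else 3 end.

Lemma valence_eq (v : cVt) :
  #|[set e | c_src e == Some v]| + #|[set e | c_tgt e == Some v]| = vdeg v.
Proof.
rewrite cardIn cardOut /vdeg.
case E: (val v) => [[k s]|[k A]]; first exact: deg_inl E.
by have [-> ->] := vert_inr E; rewrite cards1.
Qed.

Lemma harmonic_eq (v : cVt) :
  \sum_(e | c_tgt e == Some v) #|sndE e| = \sum_(e | c_src e == Some v) #|sndE e|.
Proof.
rewrite sumIn sumOut.
case E: (val v) => [[k s]|[k A]]; first by rewrite (harm_inl E).
by have [-> ->] := vert_inr E.
Qed.


Definition ivraw (v : rawV n b) : rawV n b :=
  match v with
  | inl (k, s) => inl (k, caseC s1 etas k || ~~ s)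
  | inr (k, A) => inr (k, tau_set A)
  end.

Lemma touched_tau (k : 'I_b) O : touched etas k (tau_set O) = touched etas k O.
Proof.
rewrite !touchedE !mem_tau_set !tauK.
by case: (X k \in O); case: (Y k \in O); case: (tau (X k) \in O); case: (tau (Y k) \in O).
Qed.


Lemma val_iv (v : cVt) : val (c_iv v) = ivraw (val v).
Proof.
have Hvalid : validV s1 etas (ivraw (val v)).
  have := valP v; case: (val v) => [[k s]|[k A]] /=; first by case: (caseC _ _ _).
  move=> /andP[hA hT].
  rewrite touched_tau hT andbT tau_orbits //; by case: (R_BT k).
rewrite /c_iv /insubd.
have -> : (match val v with
           | inl (k, s) => inl (k, caseC s1 etas k || ~~ s)
           | inr (k, A) => inr (k, tau_set A) end) = ivraw (val v).
  by case: (val v) => [[]|[]].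
by rewrite insubT.
Qed.

Lemma val_ie (e : cEt) : val (c_ie e) = ((val e).1, tau_set (val e).2).
Proof.
rewrite /c_ie /insubd; case: insubP => [u _ -> //|].
rewrite /validE /= tau_orbits //; [by case: (R_BT (val e).1) | exact: (valP e)].
Qed.

Lemma ivK (v : cVt) : c_iv (c_iv v) = v.
Proof.
apply: val_inj; rewrite !val_iv.
have := valP v; case: (val v) => [[k s]|[k A]] /=; last by rewrite tau_setK.
by case: (caseC _ _ _); case: s.
Qed.

Lemma ieK (e : cEt) : c_ie (c_ie e) = e.
Proof. by apply: val_inj; rewrite !val_ie tau_setK; case: (val e). Qed.

Lemma rawv_tau (k : 'I_b) O : O \in porbits (R k) \/ O \in porbits (R k.+1) ->
  rawv k (tau_set O) = ivraw (rawv k O).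
Proof.
move=> HO; rewrite /rawv touched_tau; case: ifP => Ht //=.
congr (inl (k, _)); rewrite !sideE -!caseCE.
case: (boolP (caseC s1 etas k)) => C //=.
have [h1 h2] := Hxy k.
have [q [Bq nCq HOq]] : exists q, [/\ BT q, Y k \notin porbit q (tau (X k)) & O \in porbits q].
  case: HO => HO.
    by exists (R k); split => //; apply: R_BT.
  exists (R k.+1); split => //; first by apply: R_BT.
  by rewrite RS; apply: S2c => //; apply: R_BT.
move/porbitsP: HOq => [z Ez]; subst O.
rewrite !mem_tau_set; move: Ht; rewrite touchedE => Ht.
move: (@not_both k q z Bq nCq) Ht.
by case: (X k \in _); case: (Y k \in _); case: (tau (X k) \in _); case: (tau (Y k) \in _) => //= NB;
  case: (NB isT).
Qed.


Lemma tgt_ie (e : cEt) : c_tgt (c_ie e) = omap (@c_iv n b s1 etas) (c_tgt e).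
Proof.
rewrite /c_tgt val_ie /=.
case: (ltnP (val (val e).1) b) => hj.
  have HO := valP e.
  have HO' : tau_set (val e).2 \in porbits (R (val e).1).
    by apply: tau_orbits => //; case: (R_BT (val e).1).
  have [u [Eu Vu]] := @vertex_at_some (Ordinal hj) _ (or_introl HO).
  have [u' [Eu' Vu']] := @vertex_at_some (Ordinal hj) _ (or_introl HO').
  rewrite /= in Eu Eu'; rewrite Eu Eu' /=; congr Some; apply: val_inj.
  by rewrite Vu' val_iv Vu rawv_tau //; left.
by rewrite /vertex_at insubF ?ltnNge ?hj.
Qed.

Lemma src_ie (e : cEt) : c_src (c_ie e) = omap (@c_iv n b s1 etas) (c_src e).
Proof.
rewrite /c_src val_ie /=.
case: (eqVneq (val (val e).1) 0) => Hj0 //.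
have Hlt : val (val e).1 < b.+1 := ltn_ord (val e).1.
have hj : (val (val e).1).-1 < b by move: Hlt Hj0; case: (val (val e).1).
have Hj : val (val e).1 = (Ordinal hj).+1 by rewrite /= prednK // lt0n.
have HO : (val e).2 \in porbits (R (Ordinal hj).+1) by rewrite -Hj; apply: (valP e).
have HO' : tau_set (val e).2 \in porbits (R (Ordinal hj).+1).
  by apply: tau_orbits => //; case: (R_BT (Ordinal hj).+1).
have [u [Eu Vu]] := @vertex_at_some (Ordinal hj) _ (or_intror HO).
have [u' [Eu' Vu']] := @vertex_at_some (Ordinal hj) _ (or_intror HO').
rewrite /= in Eu Eu'; rewrite Eu Eu' /=; congr Some; apply: val_inj.
by rewrite Vu' val_iv Vu rawv_tau //; right.
Qed.

Lemma ie_neq (e : cEt) : c_ie e != e.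
Proof.
apply/eqP => /(congr1 val); rewrite val_ie; case: (val e) (valP e) => j O /= HO [].
by apply/eqP; apply: (BT_noself n0 (R_BT j) HO).
Qed.

Lemma iv_fix (v : cVt) : (c_iv v = v) <-> vdeg v = 4.
Proof.
rewrite /vdeg; split.
  move/(congr1 val); rewrite val_iv; have := valP v.
  case: (val v) => [[k s]|[k A]] /=.
    by case: (caseC _ _ _); case: s => //= _ [].
  by move=> /andP[hA _] [] /eqP; have := BT_noself n0 (R_BT k) hA; rewrite /self_symmetric => /negbTE ->.
move=> H; apply: val_inj; rewrite val_iv; move: H; have := valP v.
case: (val v) => [[k s]|[k A]] //=.
by case: (caseC _ _ _); case: s.
Qed.


Definition Ez (j : nat) (z : T) : cEt :=
  Sub ((inord j : 'I_b.+1), porbit (R (inord j : 'I_b.+1)) z) (orbit_in _ _).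

Lemma Ez_val (j : nat) z : j <= b -> val (Ez j z) = (inord j, porbit (R j) z).
Proof. by move=> hj; rewrite /Ez /= inordK. Qed.

Lemma tgt_Ez (k : 'I_b) z : exists u, c_tgt (Ez k z) = Some u /\ val u = rawv k (porbit (R k) z).
Proof.
have [u [Eu Vu]] := @vertex_at_some k _ (or_introl (orbit_in (R k) z)).
exists u; split => //; rewrite /c_tgt /Ez /= inordK; [exact: Eu | exact: leqW (ltn_ord k)].
Qed.

Lemma src_Ez (k : 'I_b) z : exists u, c_src (Ez k.+1 z) = Some u /\ val u = rawv k (porbit (R k.+1) z).
Proof.
have [u [Eu Vu]] := @vertex_at_some k _ (or_intror (orbit_in (R k.+1) z)).
exists u; split => //; rewrite /c_src /Ez /= inordK; [exact: Eu | exact: (ltn_ord k)].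
Qed.

Definition inc : rel (cVt + cEt) :=
  fun a c => match a, c with
  | inl v, inr e | inr e, inl v => (c_src e == Some v) || (c_tgt e == Some v)
  | _, _ => false
  end.

Lemma inc_sym : symmetric inc.
Proof. by move=> [v|e] [v'|e']. Qed.

Local Notation cn := (connect inc).

Lemma cn_sym a c : cn a c = cn c a.
Proof. exact: (sym_connect_sym inc_sym). Qed.

Lemma same_vertex (k : 'I_b) a c :
  rawv k (porbit (R k) a) = rawv k (porbit (R k) c) -> cn (inr (Ez k a)) (inr (Ez k c)).
Proof.
move=> E.
have [u [Eu Vu]] := tgt_Ez k a; have [u' [Eu' Vu']] := tgt_Ez k c.
have Euu : u = u' by apply: val_inj; rewrite Vu Vu'.
subst u'.
apply: (@connect_trans _ _ (inl u)); apply: connect1; by rewrite /= ?Eu ?Eu' eqxx orbT.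
Qed.

Lemma rawv_step (k : 'I_b) z : rawv k (porbit (R k) z) = rawv k (porbit (R k.+1) z).
Proof.
have [h1 h2] := Hxy k.
have B := R_BT k.
rewrite /rawv.
case: (boolP (touched etas k (porbit (R k) z))) => Ht; last first.
  move: (Ht); rewrite touchedE !negb_or => /and4P[t1 t2 t3 t4].
  have E : porbit (R k.+1) z = porbit (R k) z by rewrite RS (S1 t1 t2 t3 t4).
  by rewrite E (negbTE Ht).
have Ht' : touched etas k (porbit (R k.+1) z).
  case: (boolP (touched etas k (porbit (R k.+1) z))) => // Ht'.
  move: (Ht'); rewrite touchedE !negb_or RS => /and4P[t1 t2 t3 t4].
  by move: Ht; rewrite (S1' t1 t2 t3 t4) -RS (negbTE Ht').
rewrite Ht'; congr (inl (k, _)); rewrite !sideE.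
case: (boolP (Y k \in porbit (R k) (tau (X k)))) => C //=.
have E : porbit (R k.+1) (X k) :|: porbit (R k.+1) (Y k) = porbit (R k) (X k) :|: porbit (R k) (Y k).
  by rewrite RS S2a.
have := congr1 (fun A : {set T} => z \in A) E; rewrite /= !inE.
by rewrite ![z \in porbit _ (X k)]porbit_sym ![z \in porbit _ (Y k)]porbit_sym => ->.
Qed.

Lemma cn_step (k : 'I_b) z : cn (inr (Ez k z)) (inr (Ez k.+1 z)).
Proof.
have [u [Eu Vu]] := tgt_Ez k z; have [u' [Eu' Vu']] := src_Ez k z.
have Euu : u = u' by apply: val_inj; rewrite Vu Vu' rawv_step.
subst u'.
apply: (@connect_trans _ _ (inl u)); apply: connect1; by rewrite /= ?Eu ?Eu' eqxx ?orbT.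
Qed.

Lemma cn_levels (j : nat) z : j <= b -> cn (inr (Ez 0 z)) (inr (Ez j z)).
Proof.
elim: j => [|j IH] hj; first exact: connect0.
apply: connect_trans (IH (ltnW hj)) _.
exact: (cn_step (Ordinal hj)).
Qed.


Lemma Ez_eq (j : nat) a c : j <= b -> porbit (R j) a = porbit (R j) c -> Ez j a = Ez j c.
Proof. by move=> hj E; apply: val_inj; rewrite !Ez_val // E. Qed.

Lemma side_X (k : 'I_b) a : (a = X k \/ a = Y k) -> rawv k (porbit (R k) a) = inl (k, true).
Proof.
move=> Ha; rewrite /rawv touchedE sideE.
by case: Ha => ->; rewrite porbit_id ?orbT.
Qed.

Lemma side_tX (k : 'I_b) a : (a = tau (X k) \/ a = tau (Y k)) ->
  rawv k (porbit (R k) a) = inl (k, caseC s1 etas k).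
Proof.
have B := R_BT k; have Cr : in_Ctilde (R k) by case: B.
move=> Ha; rewrite /rawv touchedE sideE -caseCE.
case: Ha => ->; rewrite porbit_id ?orbT.
  by rewrite porbit_sym (negbTE (BT_notin n0 _ B)) /= orbb.
rewrite [Y k \in porbit _ (tau (Y k))]porbit_sym (negbTE (BT_notin n0 _ B)) orbF.
by rewrite -{1}(tauK (X k)) tau_mem // porbit_sym orbb.
Qed.

Lemma cn_pair (k : 'I_b) a c : rawv k (porbit (R k) a) = rawv k (porbit (R k) c) ->
  cn (inr (Ez 0 a)) (inr (Ez 0 c)).
Proof.
move=> E; have hk : k <= b := ltnW (ltn_ord k).
apply: connect_trans (cn_levels a hk) _.
apply: connect_trans (same_vertex E) _.
by rewrite cn_sym; apply: cn_levels.
Qed.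

Lemma cn_gen (s2 : {perm T}) : R b = s2 -> forall g, g \in gens_set s1 s2 etas ->
  forall w, cn (inr (Ez 0 w)) (inr (Ez 0 (g w))).
Proof.
move=> Hs2 g; rewrite /gens_set !inE => /orP[/eqP ->|/orP[/eqP ->|/orP[Hg|Hg]]] w.
- rewrite (@Ez_eq 0 (s1 w) w) ?connect0 // R0.
  by have := porbit_perm s1 1 w; rewrite expg1.
- apply: connect_trans (cn_levels w (leqnn b)) _.
  rewrite (@Ez_eq b w (s2 w)) //; first by rewrite cn_sym; apply: cn_levels.
  by rewrite Hs2; have := porbit_perm s2 1 w; rewrite expg1.
- case/imsetP: Hg => xy Hin ->; case/tnthP: Hin => k ->.
  case: tpermP => [->|->|_ _]; last exact: connect0.
    by apply: (cn_pair (k := k)); rewrite (side_X (or_introl erefl)) (side_X (or_intror erefl)).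
  by apply: (cn_pair (k := k)); rewrite (side_X (or_introl erefl)) (side_X (or_intror erefl)).
- case/imsetP: Hg => xy Hin ->; case/tnthP: Hin => k ->.
  case: tpermP => [->|->|_ _]; last exact: connect0.
    by apply: (cn_pair (k := k)); rewrite (side_tX (or_introl erefl)) (side_tX (or_intror erefl)).
  by apply: (cn_pair (k := k)); rewrite (side_tX (or_introl erefl)) (side_tX (or_intror erefl)).
Qed.


Lemma cn_group (s2 : {perm T}) : R b = s2 -> forall g, g \in (<<gens_set s1 s2 etas>>)%g ->
  forall w, cn (inr (Ez 0 w)) (inr (Ez 0 (g w))).
Proof.
move=> Hs2 g /gen_prodgP [m [c Hc ->]].
elim: m c Hc => [|m IH] c Hc w.
  by rewrite big_ord0 perm1; exact: connect0.
rewrite big_ord_recr /= permM.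
apply: connect_trans (IH (fun i => c (widen_ord (leqnSn m) i)) (fun i => Hc _) w) _.
exact: (cn_gen Hs2 (Hc ord_max)).
Qed.

Lemma exists_z (v : cVt) : exists z, rawv (lev (val v)) (porbit (R (lev (val v))) z) = val v.
Proof.
have := valP v; case: (val v) => [[k s]|[k A]] /=.
  case: s => Hs.
    by exists (X k); rewrite (side_X (or_introl erefl)).
  exists (tau (X k)); rewrite (side_tX (or_introl erefl)).
  by move: Hs; case: (caseC _ _ _).
move=> /andP[/porbitsP [z Ez'] hT]; exists z; rewrite -Ez' /rawv (negbTE hT) //.
Qed.

Lemma connected_all (s2 : {perm T}) : R b = s2 ->
  [transitive <<gens_set s1 s2 etas>>, on [set: T] | 'P] ->
  forall a c, cn a c.
Proof.
move=> Hs2 Htr.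
have z0 : T by exists 0; rewrite addn_gt0 n0.
suff H : forall a, cn (inr (Ez 0 z0)) a.
  by move=> a c; apply: connect_trans (H c); rewrite cn_sym.
have HE : forall w, cn (inr (Ez 0 z0)) (inr (Ez 0 w)).
  move=> w; have [g Hg ->] := atransP2 Htr (in_setT z0) (in_setT w).
  exact: (cn_group Hs2 Hg z0).
have HEj : forall (j : nat) w, j <= b -> cn (inr (Ez 0 z0)) (inr (Ez j w)).
  by move=> j w hj; apply: connect_trans (HE w) (cn_levels w hj).
case=> [v|e].
  have [z Hz] := exists_z v.
  have [u [Eu Vu]] := tgt_Ez (lev (val v)) z.
  have Euv : u = v by apply: val_inj; rewrite Vu Hz.
  subst u.
  apply: connect_trans (HEj _ z (ltnW (ltn_ord _))) _.
  by apply: connect1; rewrite /inc; apply/orP; right; apply/eqP; exact: Eu.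
have := valP e; case E: (val e) => [j O] /= /porbitsP [z Ez'].
have -> : e = Ez j z.
  apply: val_inj; rewrite Ez_val; last by rewrite -ltnS.
  by rewrite E -Ez'; congr pair; apply: ord_inj; rewrite inordK.
by apply: HEj; rewrite -ltnS.
Qed.


Lemma pv_rawv (u : cVt) (k : 'I_b) O : val u = rawv k O -> c_pv u = (val k).+1.
Proof. by rewrite /c_pv /rawv => ->; case: ifP. Qed.

Lemma tgt_spec (e : cEt) :
  (c_tgt e == None) = (c_he e == b) /\ forall u, c_tgt e = Some u -> c_pv u = (c_he e).+1.
Proof.
rewrite /c_he; case: (ltnP (val (val e).1) b) => hj.
  have [u [Eu Vu]] := @vertex_at_some (Ordinal hj) (val e).2 (or_introl (valP e)).
  rewrite /c_tgt /= in Eu *; rewrite Eu (ltn_eqF hj); split => // u' [<-].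
  by rewrite (pv_rawv Vu).
have Eb : val (val e).1 = b by apply/eqP; rewrite eqn_leq hj -ltnS ltn_ord.
by rewrite /c_tgt /vertex_at insubF ?ltnNge ?hj // Eb eqxx.
Qed.

Lemma src_spec (e : cEt) :
  (c_src e == None) = (c_he e == 0) /\ forall u, c_src e = Some u -> c_pv u = c_he e.
Proof.
rewrite /c_he /c_src; case: (eqVneq (val (val e).1) 0) => Hj0 //.
have Hlt : val (val e).1 < b.+1 := ltn_ord (val e).1.
have hj : (val (val e).1).-1 < b by move: Hlt Hj0; case: (val (val e).1).
have Hj : val (val e).1 = (Ordinal hj).+1 by rewrite /= prednK // lt0n.
have HO : (val e).2 \in porbits (R (Ordinal hj).+1) by rewrite -Hj; apply: (valP e).
have [u [Eu Vu]] := @vertex_at_some (Ordinal hj) _ (or_intror HO).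
rewrite /= in Eu; rewrite Eu; split => // u' [<-].
by rewrite (pv_rawv Vu) -Hj.
Qed.

Lemma wt_pos (e : cEt) : 0 < c_wt e.
Proof.
rewrite /c_wt lt0n; have := valP e; rewrite /validE => /porbitsP [z ->].
exact: card_porbit_neq0.
Qed.

Lemma he_ie (e : cEt) : c_he (c_ie e) = c_he e.
Proof. by rewrite /c_he val_ie. Qed.

Lemma wt_ie (e : cEt) : c_wt (c_ie e) = c_wt e.
Proof. by rewrite /c_wt val_ie card_tau_set. Qed.

Lemma pv_iv (v : cVt) : c_pv (c_iv v) = c_pv v.
Proof. by rewrite /c_pv val_iv; case: (val v) => [[]|[]]. Qed.

Lemma pv_range (v : cVt) : 1 <= c_pv v <= b.
Proof. by rewrite /c_pv; case: (val v) => [[k _]|[k _]] /=; rewrite ltn_ord. Qed.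

Definition vinl (k : 'I_b) (s : bool) (h : caseC s1 etas k ==> s) : cVt :=
  Sub (inl (k, s)) h.

Lemma vdeg_inl (k : 'I_b) s h : vdeg (@vinl k s h) = if caseC s1 etas k then 4 else 3.
Proof. by []. Qed.

Lemma vdeg_4 (v : cVt) : vdeg v = 4 -> exists k, val v = inl (k, true) /\ caseC s1 etas k.
Proof.
rewrite /vdeg; have := valP v; case: (val v) => [[k s]|[k A]] //=.
case C: (caseC s1 etas k) => //=; case: s => //= _ _; by exists k.
Qed.

Lemma C_sizes (k : 'I_b) : caseC s1 etas k -> forall O,
  O \in [set porbit (R k) (X k); porbit (R k) (tau (X k))] :|:
         [set porbit (R k.+1) (X k); porbit (R k.+1) (tau (X k))] ->
  #|O| = #|porbit (R k) (X k)|.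
Proof.
move=> C O.
have [h1 h2] := Hxy k.
have B := R_BT k; have B' := R_BT k.+1.
have C1 : in_Ctilde (R k) by case: B.
have C1' : in_Ctilde (R k.+1) by case: B'.
have E := S3c n0 B h1 C; rewrite -RS in E.
have D1 : porbit (R k) (X k) :&: porbit (R k) (tau (X k)) = set0.
  by apply: orb_disj; rewrite eq_porbit_mem porbit_sym BT_notin.
have D2 : porbit (R k.+1) (X k) :&: porbit (R k.+1) (tau (X k)) = set0.
  by apply: orb_disj; rewrite eq_porbit_mem porbit_sym BT_notin.
have Ecard := congr1 (fun A : {set T} => #|A|) E; rewrite /= !cardsU D1 D2 !cards0 !subn0 in Ecard.
rewrite !Ct_orbit // !card_tau_set in Ecard.
have Ek : #|porbit (R k.+1) (X k)| = #|porbit (R k) (X k)|.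
  by move: Ecard; lia.
rewrite !inE -!orbA => /or4P[] /eqP ->; rewrite ?Ct_orbit ?card_tau_set //.
Qed.


Lemma inl_eq (a c : 'I_b * bool) : (inl a == inl c :> rawV n b) = (a == c).
Proof. by apply/eqP/eqP => [[]|->]. Qed.

Lemma Vi_eq (k : 'I_b) (u : cVt) : (c_pv u == (val k).+1) && (vdeg u != 2) =
  (val u == inl (k, true)) || ((val u == inl (k, false)) && ~~ caseC s1 etas k).
Proof.
rewrite /c_pv /vdeg; have := valP u; case: (val u) => [[k' s']|[k' A]] /= Hv; last by rewrite andbF.
rewrite !inl_eq !xpair_eqE eqSS.
have -> : (val k' == val k) = (k' == k) by [].
case: (eqVneq k' k) => [E|ne] //=; subst k'.
case: (caseC s1 etas k) Hv => /=; case: s' => //.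
Qed.

Lemma main_in (Rt : realType) (g : nat) (mu nu : seq nat) (s2 : {perm T}) (p : nat -> Rt) :
  0 < b -> b = (g + size mu + size nu).-1 -> in_Btilde_lam mu s1 ->
  perm_eq (cycle_type s2) (nu ++ nu) -> rho s1 etas b = s2 ->
  [transitive <<gens_set s1 s2 etas>>, on [set: T] | 'P] ->
  twisted_tropical_cover g mu nu b p (construction p s1 etas).
Proof.
move=> b0 Hb [HBs1 [cm [cm1 cm2 cm3 cm4]]] Hct Hs2 Htr.
have z0 : T by exists 0; rewrite addn_gt0 n0.
rewrite /twisted_tropical_cover /tropical_cover /=.
split.
  split; first exact: pv_range.
  split; first by move=> e; rewrite /c_he -ltnS ltn_ord.
  split; first by move=> e; apply: src_spec.
  split; first by move=> e; apply: tgt_spec.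
  split; first exact: wt_pos.
  split.
    move=> e _; rewrite /c_len GRing.mulrC GRing.divfK //.
    by rewrite Num.Theory.pnatr_eq0 -lt0n wt_pos.
  split.
    move=> j hj; exists (Ez j z0); by rewrite /c_he Ez_val //= inordK.
  split.
    move=> i /andP[i1 ib].
    have hk : i.-1 < b by rewrite prednK.
    have h : caseC s1 etas (Ordinal hk) ==> true by rewrite implybT.
    by exists (vinl h); rewrite /c_pv /= prednK.
  split; first by move=> v; exact: harmonic_eq.
  exact: connected_all Hs2 Htr.
have Hval : forall v : cVt, @valence Rt (tgr (construction p s1 etas)) v = vdeg v.
  by move=> v; rewrite /valence /= valence_eq.
split; first exact: ivK.
split; first exact: ieK.
split; first by move=> e; rewrite src_ie tgt_ie.
split; first by move=> e _; rewrite /c_len he_ie wt_ie.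
split; first exact: pv_iv.
split; first by move=> e; rewrite he_ie wt_ie.
split; first exact: Hb.
split.
  have cin : forall i, cm i \in porbits (R (ord0 : 'I_b.+1)) by move=> i; rewrite /= R0; apply: cm1.
  exists (fun i => (Sub (ord0, cm i) (cin i) : cEt)); split.
  - by move=> i; split => //; apply: cm2.
  - move=> e He.
    have E1 : (val e).1 = ord0 by apply: ord_inj.
    have HO : (val e).2 \in porbits s1.
      by have := valP e; rewrite /validE; move: He; rewrite /c_he => ->; rewrite R0.
    have [i Hi] := cm3 _ HO; exists i.
    by case: Hi => Ei; [left | right]; apply: val_inj; rewrite ?val_ie (surjective_pairing (val e)) E1 Ei.
  - have -> : [set e : cEt | c_he e == 0] = Eset 0 predT.
      by apply/setP => e; rewrite !inE andbT.
    rewrite (card_edges (ltn0Sn b)) -cm4; apply: eq_card => O; by rewrite !inE andbT R0.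
split.
  have Hct' : perm_eq (cycle_type (R b)) (nu ++ nu) by rewrite Hs2.
  have [c [c1 c2 c3]] := pairs_cover n0 (R_BT b) Hct'.
  have cin : forall i, c i \in porbits (R (ord_max : 'I_b.+1)) by move=> i; apply: c1.
  exists (fun i => (Sub (ord_max, c i) (cin i) : cEt)); split.
  - by move=> i; split => //; apply: c2.
  - move=> e He.
    have E1 : (val e).1 = ord_max by apply: ord_inj.
    have HO : (val e).2 \in porbits (R b).
      by have := valP e; rewrite /validE; move: He; rewrite /c_he => ->.
    have [i Hi] := c3 _ HO; exists i.
    by case: Hi => Ei; [left | right]; apply: val_inj; rewrite ?val_ie (surjective_pairing (val e)) E1 Ei.
  - have -> : [set e : cEt | c_he e == b] = Eset b predT.
      by apply/setP => e; rewrite !inE andbT.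
    rewrite (card_edges (ltnSn b)) -addnn -size_cat -(perm_size Hct) /cycle_type size_map -cardE.
    by apply: eq_card => O; rewrite !inE andbT Hs2.
split.
  move=> i /andP[i1 ib].
  have hk : i.-1 < b by rewrite prednK.
  set k := Ordinal hk.
  have Hi : i = (val k).+1 by rewrite /= prednK.
  have h1 : caseC s1 etas k ==> true by rewrite implybT.
  case: (boolP (caseC s1 etas k)) => C.
    right; exists (vinl h1); split; last by rewrite Hval /vdeg /= C.
    apply/setP => u; rewrite !inE Hval Hi Vi_eq C andbF orbF.
    by apply/eqP/eqP => [E|->]; [apply: val_inj | ].
  have h2 : caseC s1 etas k ==> false by rewrite (negbTE C).
  left; exists (vinl h1), (vinl h2); split.
  - by apply/eqP => /(congr1 val) /= [].
  - apply/setP => u; rewrite !inE Hval Hi Vi_eq C andbT.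
    by congr orb; apply/eqP/eqP => [E|->]; (try apply: val_inj).
  - by rewrite Hval /vdeg /= (negbTE C).
  - by rewrite Hval /vdeg /= (negbTE C).
split.
  move=> v Hv4; rewrite Hval in Hv4; have [k [Ev C]] := vdeg_4 Hv4.
  have [EI EO] := vert_C Ev C.
  have Hs : forall e : cEt, (c_src e == Some v) || (c_tgt e == Some v) ->
      c_wt e = #|porbit (R k) (X k)|.
    move=> e He; apply: (C_sizes C); rewrite inE.
    case/orP: He => He; [move: (memOut He); rewrite EO | move: (memIn He); rewrite EI];
      by move=> ->; rewrite ?orbT.
  by move=> e e' He He'; rewrite (Hs e He) (Hs e' He').
split; first exact: ie_neq.
by move=> v; rewrite Hval; exact: iv_fix.
Qed.

End Constr.

Theorem lemma4p2 (R : realType) (g n : nat) (mu nu : seq nat) (b : nat)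
  (sigma1 sigma2 : {perm 'I_(n + n)})
  (etas : b.-tuple ('I_(n + n) * 'I_(n + n)))
  (p : nat -> R) :
  0 < n ->
  is_partition n mu -> is_partition n nu ->
  b = (g + size mu + size nu).-1 -> 0 < b ->
  in_Cg mu nu sigma1 etas sigma2 ->
  (forall i, 1 <= i < b -> (p i < p i.+1)%R) ->
  twisted_tropical_cover g mu nu b p (construction p sigma1 etas).
Proof.
move=> n0 _ _ Hb b0 [Hl Hct Het Hs2 Htr] _.
have HB0 : BT sigma1 := Btilde_BT (proj1 Hl).
have Hxy : forall k : 'I_b, (tnth etas k).1 != (tnth etas k).2 /\
                            (tnth etas k).2 != tauf (tnth etas k).1.
  by move=> k; apply: Het; apply: mem_tnth.
exact: (main_in n0 HB0 Hxy p b0 Hb Hl Hct Hs2 Htr).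
Qed.
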